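(* For every zero-normalized $\Gamma_{m,n}$-semimodule $\Delta$, the partition $P(\widehat{\Delta})$ is the conjugate (transpose) of the partition $P(\Delta)$.
   Context: Let $m,n$ be coprime positive integers and $\Gamma_{m,n}=\{am+bn:a,b\in\mathbb{Z}_{\ge0}\}$. A $\Gamma_{m,n}$-semimodule is $\Delta\subset\mathbb{Z}_{\ge0}$ with $\Delta+\Gamma_{m,n}\subset\Delta$; zero-normalized means $\min\Delta=0$. Its dual is $\Delta^*=\{\varphi\in\mathbb{Z}:\varphi+\Delta\subset\Gamma_{m,n}\}$ and $\widehat\Delta=\Delta^*-\min\Delta^*$ (equivalently $\max(\mathbb{Z}\setminus\Delta)-(\mathbb{Z}\setminus\Delta)$). For a zero-normalized semimodule $\Delta$ (which contains all sufficiently large integers), $P(\Delta)$ is the partition whose boundary lattice path is obtained by reading the integers $0,1,2,\dots$ in order and taking a north unit step for each $x\in\Delta$ and a west unit step for each $x\notin\Delta$ (the path bounds the Young diagram of $P(\Delta)$ from above); equivalently, the parts of $P(\Delta)$ are the positive numbers among $\#\{x\in\Delta: x<y\}$, $y\in\mathbb{Z}_{\ge0}\setminus\Delta$. This $P(\Delta)$ is a simultaneous $m$-core and $n$-core (Anderson's correspondence). *)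

(* Defs.v *)
From Stdlib Require Import ClassicalEpsilon.
From mathcomp Require Import all_boot all_order all_algebra.
Set Implicit Arguments. Unset Strict Implicit. Unset Printing Implicit Defensive.
Import Order.TTheory GRing.Theory Num.Theory.

Definition Gamma (m n : nat) (g : nat) : Prop :=
  exists a b : nat, g = (a * m + b * n)%N.
Definition GammaZ (m n : nat) (z : int) : Prop :=
  exists a b : nat, z = Posz (a * m + b * n)%N.

Definition semimodule (m n : nat) (D : nat -> Prop) : Prop :=
  forall x g, D x -> Gamma m n g -> D (x + g)%N.

(* zero-normalized: min Delta = 0 (Delta is a subset of Z_{>=0}). *)
Definition zero_normalized (D : nat -> Prop) : Prop := D 0%N.

Definition dual (m n : nat) (D : nat -> Prop) (phi : int) : Prop :=
  forall x, D x -> GammaZ m n (phi + Posz x)%R.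

(* min Delta^* (chosen by Hilbert's epsilon; it exists for semimodules). *)
Definition dual_min (m n : nat) (D : nat -> Prop) : int :=
  epsilon (inhabits 0%R)
    (fun f => dual m n D f /\ forall g, dual m n D g -> (f <= g)%R).

(* hat Delta = Delta^* - min Delta^*, a subset of Z_{>=0}, given as a set of nat. *)
Definition hat (m n : nat) (D : nat -> Prop) : nat -> Prop :=
  fun k => dual m n D (dual_min m n D + Posz k)%R.

Definition decP (P : Prop) : bool :=
  if excluded_middle_informative P then true else false.

(* a bound N with [N, oo) contained in D (chosen by epsilon; the value of
   P below does not depend on the choice) *)
Definition bound (D : nat -> Prop) : nat :=
  epsilon (inhabits 0%N) (fun N => forall y, (N <= y)%N -> D y).

Definition P (D : nat -> Prop) : seq nat :=
  sort geq
    [seq c <- [seq count (fun x => decP (D x)) (iota 0 y)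
              | y <- iota 0 (bound D) & ~~ decP (D y)]
    | (0 < c)%N].

Definition conjugate (lam : seq nat) : seq nat :=
  [seq count (fun p => (j <= p)%N) lam | j <- iota 1 (foldr maxn 0%N lam)].

(* Main.v *)
Require Import Defs.
From Stdlib Require Import ClassicalEpsilon Classical.
From mathcomp Require Import all_boot all_order all_algebra.
From mathcomp Require Import zify ring.
Import Order.TTheory GRing.Theory Num.Theory.

Fixpoint Aseq (s : seq bool) : seq nat :=
  match s with [::] => [::] | b :: t => if b then map S (Aseq t) else 0 :: Aseq t end.
Fixpoint Tseq (s : seq bool) : seq nat :=
  match s with [::] => [::] | b :: t => if b then count negb t :: Tseq t else Tseq t end.
Definition Cf (a : seq nat) : seq nat :=
  [seq count (fun p => j <= p) a | j <- iota 1 (foldr maxn 0 a)].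

Lemma Aseq_rcons u b : Aseq (rcons u b) = if b then Aseq u else rcons (Aseq u) (count id u).
Proof.
elim: u => [|c t IH] /=; first by case: b.
case: b IH => /= ->; case: c => //=; by rewrite map_rcons.
Qed.

Lemma Aseq_rev s : Aseq (map negb (rev s)) = rev (Tseq s).
Proof.
elim: s => [|b t IH] //=.
rewrite rev_cons map_rcons Aseq_rcons IH; case: b => //=.
by rewrite rev_cons count_map count_rev.
Qed.

Lemma size_Aseq s : size (Aseq s) = count negb s.
Proof. elim: s => [|[] t IH] //=; by rewrite ?size_map IH. Qed.

Lemma foldr_mapS a : a != [::] -> foldr maxn 0 (map S a) = (foldr maxn 0 a).+1.
Proof.
elim: a => [|x [|y a] IH] //= _.
have /= -> := IH isT.
by rewrite maxnSS.
Qed.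

Lemma TC s : [seq c <- Tseq s | 0 < c] = Cf (Aseq s).
Proof.
elim: s => [|b t IH] //=.
case: b => /=.
  case: (posnP (count negb t)) => [H0|Hp].
    rewrite IH.
    have : size (Aseq t) = 0 by rewrite size_Aseq H0.
    by case: (Aseq t).
  rewrite IH /Cf.
  have Hne : Aseq t != [::] by rewrite -size_eq0 size_Aseq -lt0n.
  rewrite foldr_mapS //= -size_Aseq.
  congr cons.
    rewrite count_map; apply/eqP; rewrite -[X in _ == X]count_predT.
    by rewrite count_predT.
  have E : forall k, iota 2 k = map S (iota 1 k) by move=> k; exact: (iotaDl 1 1 k).
  rewrite E -map_comp; apply: eq_map => j /=.
  by rewrite count_map; apply: eq_count => x.
rewrite IH /Cf /=; rewrite max0n; apply/eq_in_map => j.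
by rewrite mem_iota => /andP [Hj _] /=; case: j Hj.
Qed.

Lemma Cf_sorted a : sorted geq (Cf a).
Proof.
rewrite /Cf; apply: (homo_sorted (e := leq)); last exact: iota_sorted.
move=> x y Hxy; rewrite /geq /=; apply: sub_count => p /= H; exact: leq_trans H.
Qed.

Lemma geq_trans : transitive geq.
Proof. move=> y x z /= H1 H2; exact: leq_trans H2 H1. Qed.
Lemma geq_anti : antisymmetric geq.
Proof. move=> x y H; apply: anti_leq; by rewrite andbC. Qed.
Lemma geq_tot : total geq.
Proof. move=> x y; exact: leq_total. Qed.

Lemma sort_rev_Cf a : sort geq (rev (Cf a)) = Cf a.
Proof.
apply: (sorted_eq geq_trans geq_anti); [exact: (sort_sorted geq_tot) | exact: Cf_sorted |].
by rewrite perm_sort perm_rev.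
Qed.

Lemma foldr_big s : foldr maxn 0 s = \max_(i <- s) i.
Proof. elim: s => [|x s IH] /=; by rewrite ?big_nil ?big_cons ?IH. Qed.

Lemma foldr_filter_pos a : foldr maxn 0 [seq c <- a | 0 < c] = foldr maxn 0 a.
Proof. elim: a => [|x a IH] //=; case: x => [|x] /=; by rewrite ?max0n IH. Qed.

Lemma conj_sort a : conjugate (sort geq [seq c <- a | 0 < c]) = Cf a.
Proof.
have Hp : perm_eq (sort geq [seq c <- a | 0 < c]) [seq c <- a | 0 < c] by rewrite perm_sort.
rewrite /conjugate /Cf foldr_big (perm_big _ Hp) -foldr_big.
rewrite foldr_filter_pos; apply/eq_in_map => j; rewrite mem_iota => /andP [Hj _].
have /permP -> := Hp.
rewrite count_filter; apply: eq_count => x /=.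
case Hx: (j <= x) => //=; exact: leq_trans Hj Hx.
Qed.

Lemma Aseq_iota (d : nat -> bool) N k :
  Aseq (map d (iota k N)) = [seq count d (iota k (y - k)) | y <- iota k N & ~~ d y].
Proof.
elim: N k => [|N IH] k //=.
case Hk: (d k) => /=; rewrite IH.
  rewrite -map_comp; apply/eq_in_map => y; rewrite mem_filter mem_iota => /and3P [_ Hy _] /=.
  by rewrite -(subnSK Hy) /= Hk.
rewrite subnn /=; congr cons.
apply/eq_in_map => y; rewrite mem_filter mem_iota => /and3P [_ Hy _] /=.
by rewrite -(subnSK Hy) /= Hk.
Qed.

Lemma decPP (Q : Prop) : reflect Q (Defs.decP Q).
Proof. rewrite /Defs.decP; case: (excluded_middle_informative Q) => H; by constructor. Qed.

Lemma filter_bound (E : nat -> bool) K j : (forall y, K <= y -> E y) ->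
  [seq y <- iota 0 (K + j) | ~~ E y] = [seq y <- iota 0 K | ~~ E y].
Proof.
move=> HK; rewrite iotaD filter_cat.
have -> : [seq y <- iota (0 + K) j | ~~ E y] = [::].
  rewrite (@eq_in_filter _ _ pred0) ?filter_pred0 //.
  move=> y; rewrite mem_iota => /andP [Hy _] /=; by rewrite HK.
by rewrite cats0.
Qed.

Lemma filter_bound2 (E : nat -> bool) K1 K2 : (forall y, K1 <= y -> E y) ->
  (forall y, K2 <= y -> E y) ->
  [seq y <- iota 0 K1 | ~~ E y] = [seq y <- iota 0 K2 | ~~ E y].
Proof.
move=> H1 H2.
rewrite -(@filter_bound _ _ (maxn K1 K2 - K1) H1) -(@filter_bound _ _ (maxn K1 K2 - K2) H2).
by rewrite !subnKC // ?leq_maxl ?leq_maxr.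
Qed.

Lemma P_eq (E : nat -> Prop) N : (forall y, N <= y -> E y) ->
  P E = sort geq [seq c <- Aseq (map (fun y => Defs.decP (E y)) (iota 0 N)) | 0 < c].
Proof.
move=> HN; rewrite /P Aseq_iota.
have Hb : forall y, bound E <= y -> E y.
  rewrite /bound; exact: (epsilon_spec (inhabits 0%N) (fun N => forall y, (N <= y)%N -> E y) (ex_intro _ N HN)).
have HN' : forall y, N <= y -> Defs.decP (E y) by move=> y Hy; apply/decPP; auto.
have Hb' : forall y, bound E <= y -> Defs.decP (E y) by move=> y Hy; apply/decPP; auto.
rewrite (@filter_bound2 _ _ _ Hb' HN'); congr (sort _ (filter _ _)); apply: eq_map => y.
by rewrite subn0.
Qed.

Section NT.
Variables (m n : nat).
Hypotheses (Hm : (0 < m)%N) (Hn : (0 < n)%N) (Hco : coprime m n).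
Local Open Scope ring_scope.

Definition fr : int := (Posz (m * n)) - Posz m - Posz n.

Lemma GammaZ_ge0 z : GammaZ m n z -> 0 <= z.
Proof. by move=> [a [b ->]]. Qed.

Lemma symm (k : int) : GammaZ m n k \/ GammaZ m n (fr - k).
Proof.
have [u [v Huv]] := Bezoutz (Posz m) (Posz n).
have Hg : gcdz (Posz m) (Posz n) = 1.
  by rewrite /gcdz /= (eqP Hco).
rewrite Hg in Huv.
set q := ((k * v) %/ Posz m)%Z; set r := ((k * v) %% Posz m)%Z.
have Hqr : k * v = q * Posz m + r by rewrite /q /r -divz_eq.
have Hr0 : 0 <= r by rewrite /r modz_ge0 // eqz_nat -lt0n.
have Hrm : r < Posz m by rewrite /r ltz_pmod.
have Hk : k = (k * u + q * Posz n) * Posz m + r * Posz n.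
  have E : k = k * (u * Posz m + v * Posz n) by rewrite Huv mulr1.
  rewrite {1}E mulrDr (mulrA k v) Hqr; ring.
case: (lerP 0 (k * u + q * Posz n)) => HQ.
  left; exists (absz (k * u + q * Posz n)), (absz r).
  rewrite PoszD !PoszM !gez0_abs //.
right; exists (absz (- (k * u + q * Posz n) - 1)%R), (absz (Posz m - 1 - r)%R).
rewrite PoszD !PoszM !gez0_abs /fr ?PoszM; last 2 first.
- lia.
- lia.
move: (k * u + q * Posz n) Hk HQ => Q Hk _; rewrite Hk; ring.
Qed.

Lemma notf : ~ GammaZ m n fr.
Proof.
move=> [a [b Hab]].
have E : ((a.+1) * m + (b.+1) * n = m * n)%N.
  move: Hab; rewrite /fr; lia.
have H1 : (m %| b.+1 * n)%N.
  apply/dvdnP; exists (n - a.+1)%N; rewrite mulnBl; lia.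
have H2 : (n %| a.+1 * m)%N.
  apply/dvdnP; exists (m - b.+1)%N; rewrite mulnBl; lia.
rewrite Gauss_dvdl // in H1.
rewrite Gauss_dvdl 1?coprime_sym // in H2.
have L1 := dvdn_leq (ltn0Sn b) H1.
have L2 := dvdn_leq (ltn0Sn a) H2.
have : (m * n < a.+1 * m + b.+1 * n)%N.
  have : (n * m <= a.+1 * m)%N by rewrite leq_mul2r L2 orbT.
  have : (m * n <= b.+1 * n)%N by rewrite leq_mul2r L1 orbT.
  have : (0 < m * n)%N by rewrite muln_gt0 Hm Hn.
  lia.
lia.
Qed.

Variable D : nat -> Prop.
Hypotheses (HD : semimodule m n D) (HD0 : zero_normalized D).

Lemma dual_iff phi : dual m n D phi <-> ~ (0 <= fr - phi /\ D (absz (fr - phi))).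
Proof.
split.
  move=> Hd [H0 HDx]; apply: notf.
  have := Hd _ HDx; rewrite gez0_abs //.
  by have -> : phi + (fr - phi) = fr by ring.
move=> H x Dx.
case: (symm (phi + Posz x)) => // [[a [b Hab]]].
exfalso; apply: H.
have E : fr - phi = Posz (x + (a * m + b * n)).
  by rewrite PoszD -Hab; ring.
rewrite E; split => //=.
apply: HD => //; by exists a, b.
Qed.

Lemma large y : fr < Posz y -> D y.
Proof.
move=> Hy; case: (symm (Posz y)) => [[a [b Hab]]|/GammaZ_ge0 H].
  have : D (0 + (a * m + b * n))%N by apply: HD => //; exists a, b.
  by case: Hab => ->.
exfalso; move: H Hy; lia.
Qed.

Lemma exN_gen K : (forall y, (K <= y)%N -> D y) ->
  exists N, (forall y, (N <= y)%N -> D y) /\ ((0 < N)%N -> ~ D N.-1).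
Proof.
elim: K => [|K IH] H.
  by exists 0%N; split.
case: (classic (D K)) => HK.
  apply: IH => y; rewrite leq_eqVlt => /orP [/eqP <- //|]; exact: H.
by exists K.+1; split.
Qed.

Lemma exN : exists N, (forall y, (N <= y)%N -> D y) /\ ((0 < N)%N -> ~ D N.-1).
Proof.
apply: (@exN_gen (absz fr).+1) => y Hy; apply: large.
move: Hy; lia.
Qed.

Section WithN.
Variable N : nat.
Hypotheses (HN1 : forall y, (N <= y)%N -> D y) (HN2 : (0 < N)%N -> ~ D N.-1).

Lemma cspec : dual m n D (fr - Posz N + 1) /\ forall g, dual m n D g -> fr - Posz N + 1 <= g.
Proof.
split.
  apply/dual_iff => [[H0 HDx]].
  have E : fr - (fr - Posz N + 1) = Posz N - 1 by ring.
  rewrite E in H0 HDx.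
  case: N HN1 HN2 H0 HDx => [|N'] _ H2 H0 HDx; first by move: H0; lia.
  apply: H2 => //.
  by have -> : N'.+1.-1 = absz (Posz N'.+1 - 1) by lia.
move=> g /dual_iff Hg; rewrite leNgt; apply/negP => Hlt; apply: Hg.
split; first by move: Hlt; lia.
apply: HN1; move: Hlt; lia.
Qed.

Lemma dual_min_eq : dual_min m n D = fr - Posz N + 1.
Proof.
rewrite /dual_min.
have [He1 He2] := epsilon_spec (inhabits 0%R)
  (fun f => dual m n D f /\ forall g, dual m n D g -> (f <= g)%R) (ex_intro _ _ cspec).
apply: le_anti; apply/andP; split; first by apply: He2; exact: cspec.1.
exact: cspec.2 _ He1.
Qed.

Lemma hat_iff k : hat m n D k <-> ~ (0 <= Posz N - 1 - Posz k /\ D (absz (Posz N - 1 - Posz k)%R)).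
Proof.
rewrite /hat dual_min_eq dual_iff.
by have -> : fr - (fr - Posz N + 1 + Posz k) = Posz N - 1 - Posz k by ring.
Qed.

Lemma hat_large k : (N <= k)%N -> hat m n D k.
Proof. move=> Hk; apply/hat_iff => [[H _]]; move: H; lia. Qed.

Lemma hat_dec k : (k < N)%N -> Defs.decP (hat m n D k) = ~~ Defs.decP (D (N.-1 - k)).
Proof.
move=> Hk.
have E : absz (Posz N - 1 - Posz k)%R = (N.-1 - k)%N by lia.
case: (decPP (D (N.-1 - k))) => H /=.
  apply/decPP; rewrite hat_iff E => H'; apply: H'; split => //; lia.
apply/decPP; apply/hat_iff; rewrite E; by case.
Qed.
End WithN.

End NT.

Theorem mainTheorem11 (m n : nat) (D : nat -> Prop) :
  (0 < m)%N -> (0 < n)%N -> coprime m n ->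
  semimodule m n D -> zero_normalized D ->
  P (hat m n D) = conjugate (P D).
Proof.
move=> Hm Hn Hco HD HD0.
have [N [HN1 HN2]] := exN m n Hm Hn Hco D HD HD0.
rewrite (@P_eq _ _ HN1) (@P_eq _ _ (hat_large m n Hm Hn Hco D HD N HN1 HN2)).
have Hs : map (fun y => Defs.decP (hat m n D y)) (iota 0 N) =
          map negb (rev (map (fun y => Defs.decP (D y)) (iota 0 N))).
  apply: (@eq_from_nth _ false); first by rewrite !size_map size_rev size_map.
  move=> i; rewrite size_map size_iota => Hi.
  rewrite (nth_map 0) ?size_iota // nth_iota // add0n.
  rewrite (nth_map false) ?size_rev ?size_map ?size_iota //.
  rewrite nth_rev ?size_map ?size_iota // (nth_map 0) ?size_iota; last lia.
  rewrite nth_iota; last lia.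
  rewrite add0n (hat_dec m n Hm Hn Hco D HD N HN1 HN2 i Hi).
  by have -> : (N - i.+1 = N.-1 - i)%N by lia.
rewrite Hs Aseq_rev filter_rev TC sort_rev_Cf conj_sort.
done.
Qed.
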